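(* Let $T\in TP(d)$ be a biplanar extremal thermal process and let $(\lambda,\mu)$ be a pair of orderings for which the drawing of $G(T)$ is plain (orders $\pi_{in}(T)=\lambda$, $\pi_{out}(T)=\mu$). Let $p$ be a state of which $\lambda$ is a $\beta$-order. Then $r=Tp$ is an extreme point of $p^{TP}=\{Sp:S\in TP(d)\}$ and $\mu$ is a $\beta$-order of $r$. If moreover the ratios $p_i/g_i$ are pairwise distinct, then $T$ is the only element of $TP(d)$ mapping $p$ to $r$.
   Context: Fix $d\ge 2$, $\beta\in(0,\infty)$ and pairwise distinct reals $E_0=0,E_1,\dots,E_{d-1}$. Put $q_{m,n}=e^{-\beta(E_m-E_n)}$, $Z=\sum_j q_{j,0}$, $g_i=q_{i,0}/Z$. A state is a probability vector in $\mathbb{R}^d$. $TP(d)$ is the set of $d\times d$ real matrices with non-negative entries, columns summing to $1$, and $Tg=g$; an extremal thermal process is an extreme point of $TP(d)$. A $\beta$-order of a state $p$ is a tuple $(\pi(0),\dots,\pi(d-1))$ for a permutation $\pi$ of $\{0,\dots,d-1\}$ with $p_{\pi(0)}/g_{\pi(0)}\ge\dots\ge p_{\pi(d-1)}/g_{\pi(d-1)}$. For $T\in TP(d)$, $G(T)$ is the bipartite graph with left vertices $L_0,\dots,L_{d-1}$ (columns), right vertices $R_0,\dots,R_{d-1}$ (rows), and an edge $\{L_j,R_i\}$ iff $T_{ij}>0$. Given orderings $\lambda=(\lambda_0,\dots,\lambda_{d-1})$, $\mu=(\mu_0,\dots,\mu_{d-1})$ (permutations of $\{0,\dots,d-1\}$),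 place $L_{\lambda_a}$ at height $a$ on one vertical line and $R_{\mu_b}$ at height $b$ on a parallel line, edges drawn straight; the drawing is plain if there are no two edges $\{L_{\lambda_a},R_{\mu_b}\}$, $\{L_{\lambda_{a'}},R_{\mu_{b'}}\}$ with $a<a'$ and $b>b'$. An extremal thermal process is biplanar if some pair $(\lambda,\mu)$ gives a plain drawing. *)

(* Defs.v *)
From HB Require Import structures.
From mathcomp Require Import all_boot all_order all_algebra all_fingroup.
From mathcomp Require Import all_classical all_reals.
From mathcomp Require Import sequences exp.
Set Implicit Arguments. Unset Strict Implicit. Unset Printing Implicit Defensive.
Import Order.TTheory GRing.Theory Num.Theory.
Local Open Scope ring_scope.

Section Thermal.
Variables (R : realType) (d : nat).

Definition idx0 (hd : (1 < d)%N) : 'I_d := Ordinal (ltnW hd).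

Definition qfac (beta : R) (E : 'I_d -> R) (m n : 'I_d) : R :=
  expR (- (beta * (E m - E n))).

Definition Zpart (beta : R) (E : 'I_d -> R) (z : 'I_d) : R :=
  \sum_(j < d) qfac beta E j z.

Definition gibbs (beta : R) (E : 'I_d -> R) (z : 'I_d) : 'cV[R]_d :=
  \col_i (qfac beta E i z / Zpart beta E z).

Definition is_state (p : 'cV[R]_d) : Prop :=
  (forall i, 0 <= p i 0) /\ \sum_(i < d) p i 0 = 1.

Definition TP (g : 'cV[R]_d) (T : 'M[R]_d) : Prop :=
  (forall i j, 0 <= T i j) /\
  (forall j, \sum_(i < d) T i j = 1) /\
  T *m g = g.

Definition extreme_point (V : lmodType R) (S : V -> Prop) (x : V) : Prop :=
  S x /\
  forall y z t, S y -> S z -> 0 < t -> t < 1 ->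
    x = t *: y + (1 - t) *: z -> y = z.

Definition extremal_TP (g : 'cV[R]_d) (T : 'M[R]_d) : Prop :=
  extreme_point (TP g) T.

Definition beta_order (g p : 'cV[R]_d) (lam : {perm 'I_d}) : Prop :=
  forall a b : 'I_d, (a < b)%N ->
    p (lam b) 0 / g (lam b) 0 <= p (lam a) 0 / g (lam a) 0.

(* edge {L_j, R_i} of G(T) iff T_{ij} > 0 *)
Definition edgeG (T : 'M[R]_d) (j i : 'I_d) : Prop := 0 < T i j.

Definition plain (T : 'M[R]_d) (lam mu : {perm 'I_d}) : Prop :=
  ~ exists a a' b b' : 'I_d,
      [/\ (a < a')%N, (b' < b)%N, edgeG T (lam a) (mu b) & edgeG T (lam a') (mu b')].

Definition biplanar (g : 'cV[R]_d) (T : 'M[R]_d) : Prop :=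
  extremal_TP g T /\ exists lam mu, plain T lam mu.

Definition orbitTP (g p : 'cV[R]_d) (r : 'cV[R]_d) : Prop :=
  exists S, TP g S /\ r = S *m p.

End Thermal.

(* Main.v *)
Require Import Defs.
From HB Require Import structures.
From mathcomp Require Import all_boot all_order all_algebra all_fingroup.
From mathcomp Require Import all_classical all_reals.
From mathcomp Require Import sequences exp.
From mathcomp Require Import lra.
Import Order.TTheory GRing.Theory Num.Theory.
Local Open Scope ring_scope.

Lemma thr (R : realType) (I : finType) (P Q : pred I) (f : I -> R) :
 (forall j j', P j -> Q j' -> f j' <= f j) ->
 exists c, (forall j, P j -> c <= f j) /\ (forall j, Q j -> f j <= c).
Proof.
move=> H; case: (pickP P) => [j0 Pj0|noP].
  case: (arg_minP f Pj0) => jm Pjm Hm.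
  by exists (f jm); split => // j Qj; apply: H.
exists (\sum_j `|f j|); split => [j|j _]; first by rewrite noP.
rewrite (bigD1 j) //= (le_trans (ler_norm _)) // lerDl sumr_ge0 //.
Qed.

Lemma pos_term (R : realType) (I : finType) (P : pred I) (F : I -> R) :
  0 < \sum_(i | P i) F i -> exists i, P i /\ 0 < F i.
Proof.
move=> H; case: (pickP (fun i => P i && (0 < F i))) => [i /andP[] Pi Fi|none].
  by exists i.
have : \sum_(i | P i) F i <= 0.
  apply: sumr_le0 => i Pi; move: (none i); rewrite Pi /= => /negbT.
  by rewrite -leNgt.
by rewrite leNgt H.
Qed.

Arguments pos_term {R I P F}.

Section Main.
Variables (R : realType) (d : nat) (g p : 'cV[R]_d) (T : 'M[R]_d).
Variables (lam mu : {perm 'I_d}).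
Hypotheses (gpos : forall i, 0 < g i 0) (HT : TP g T) (Hpl : plain T lam mu)
  (Hbo : beta_order g p lam).

Let x j := p j 0 / g j 0.
Let inA k (i : 'I_d) := ((mu^-1)%g i < k)%N.
Let W (S : 'M[R]_d) k j := \sum_(i | inA k i) (S i j * g j 0).

Lemma gx j : g j 0 * x j = p j 0.
Proof. by rewrite /x mulrCA mulfV ?mulr1 // gt_eqF. Qed.

Lemma L1 i i' j j' : 0 < T i j -> 0 < T i' j' ->
  ((mu^-1)%g i < (mu^-1)%g i')%N -> x j' <= x j.
Proof.
move=> Tij Tij' lt.
have : ~~ ((lam^-1)%g j' < (lam^-1)%g j)%N.
  apply/negP => lt2; apply: Hpl.
  exists ((lam^-1)%g j'), ((lam^-1)%g j), ((mu^-1)%g i'), ((mu^-1)%g i).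
  by split => //; rewrite /edgeG !permKV.
rewrite -leqNgt leq_eqVlt => /orP [e| lt3].
  have e' : (lam^-1)%g j = (lam^-1)%g j' by apply/eqP.
  by rewrite (perm_inj e').
by have := Hbo _ _ lt3; rewrite !permKV.
Qed.

Lemma splitA (F : 'I_d -> R) i :
  \sum_(i' | inA ((mu^-1)%g i).+1 i') F i' = F i + \sum_(i' | inA ((mu^-1)%g i) i') F i'.
Proof.
rewrite (bigD1 i) /=; last by rewrite /inA ltnS.
congr (_ + _); apply: eq_bigl => i'; rewrite /inA ltnS leq_eqVlt.
case: (eqVneq i' i) => [->|ne]; first by rewrite ltnn eqxx.
rewrite andbT.
have -> : (nat_of_ord ((mu^-1)%g i') == nat_of_ord ((mu^-1)%g i)) = false.
  apply/negbTE; apply: contra ne => /eqP e.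
  have e' : (mu^-1)%g i' = (mu^-1)%g i by apply/val_inj.
  by rewrite (perm_inj e').
by [].
Qed.

Lemma ps_inj (u v : 'cV[R]_d) :
  (forall k, \sum_(i | inA k i) u i 0 = \sum_(i | inA k i) v i 0) -> u = v.
Proof.
move=> H; apply/matrixP => i j; rewrite (ord1 j).
have := H ((mu^-1)%g i).+1; rewrite !splitA H; exact: addIr.
Qed.

Section TPS.
Variable S : 'M[R]_d.
Hypothesis HS : TP g S.

Lemma W_ge0 k j : 0 <= W S k j.
Proof.
case: HS => S0 _; apply: sumr_ge0 => i _; apply: mulr_ge0 => //.
exact: ltW.
Qed.

Lemma W_split k j : g j 0 = W S k j + \sum_(i | ~~ inA k i) (S i j * g j 0).
Proof.
case: HS => _ [S1 _]; rewrite -[LHS]mul1r -(S1 j) big_distrl (bigID (inA k)) //.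
Qed.

Lemma W_le k j : W S k j <= g j 0.
Proof.
rewrite [X in _ <= X](W_split k j) lerDl; apply: sumr_ge0 => i _; apply: mulr_ge0.
  by case: HS.
exact: ltW.
Qed.

Lemma W_sum k : \sum_j W S k j = \sum_(i | inA k i) g i 0.
Proof.
case: HS => _ [_ Sg]; rewrite /W exchange_big /=; apply: eq_bigr => i _.
by rewrite -{2}Sg mxE.
Qed.

Lemma L5 k : \sum_(i | inA k i) (S *m p) i 0 = \sum_j W S k j * x j.
Proof.
rewrite /W; under [RHS]eq_bigr do rewrite big_distrl /=.
rewrite exchange_big /=; apply: eq_bigr => i _; rewrite mxE.
by apply: eq_bigr => j _; rewrite -mulrA gx.
Qed.

End TPS.

Lemma L2 k : exists c, (forall j, 0 < W T k j -> c <= x j) /\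
                       (forall j, W T k j < g j 0 -> x j <= c).
Proof.
apply: (@thr R _ (fun j => 0 < W T k j) (fun j => W T k j < g j 0) x).
move=> j j' /= Pj Qj'.
have [i [Ai Ti]] := pos_term Pj.
have : 0 < \sum_(i | ~~ inA k i) (T i j' * g j' 0).
  by rewrite -(@ltrD2l _ (W T k j')) -W_split // addr0.
move=> /pos_term [i' [Ai' Ti']].
apply: (@L1 i i' j j').
- by move: Ti; rewrite pmulr_lgt0.
- by move: Ti'; rewrite pmulr_lgt0.
by move: Ai Ai'; rewrite /inA -leqNgt => /leq_trans H /H.
Qed.

Lemma L4 S k : TP g S ->
  \sum_j W S k j * x j <= \sum_j W T k j * x j /\
  ((forall j j', j != j' -> x j != x j') ->
    \sum_j W S k j * x j = \sum_j W T k j * x j -> forall j, W S k j = W T k j).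
Proof.
move=> HS; have [c [Hc1 Hc2]] := L2 k.
pose dl j := W T k j - W S k j.
have Hpos j : 0 <= dl j * (x j - c).
  have [hp|hn|->] := ltgtP (dl j) 0; last by rewrite mul0r.
  - apply: mulr_le0; first exact: ltW.
    rewrite subr_le0; apply: Hc2; apply: (lt_le_trans _ (@W_le S HS k j)).
    by rewrite -subr_lt0.
  - apply: mulr_ge0; first exact: ltW.
    rewrite subr_ge0; apply: Hc1; apply: (le_lt_trans (@W_ge0 S HS k j)).
    by rewrite -subr_gt0.
have Hd0 : \sum_j dl j = 0.
  by rewrite /dl sumrB (@W_sum T HT) (@W_sum S HS) subrr.
have E1 : \sum_j dl j * (x j - c) =
          \sum_j W T k j * x j - \sum_j W S k j * x j.
  under eq_bigr do rewrite mulrBr.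
  rewrite sumrB -big_distrl /= Hd0 mul0r subr0 -sumrB.
  by apply: eq_bigr => j _; rewrite /dl mulrBl.
split.
  by rewrite -subr_ge0 -E1; apply: sumr_ge0 => j _.
move=> xinj Heq.
have Z : \sum_j dl j * (x j - c) = 0 by rewrite E1 Heq subrr.
have Z' := psumr_eq0P (fun j _ => Hpos j) Z.
move=> j; apply/eqP; rewrite eq_sym -subr_eq0; apply/negPn/negP => nz.
have xj : x j = c.
  by move: (Z' j isT) => /eqP; rewrite mulf_eq0 (negbTE nz) subr_eq0 => /eqP.
move: Hd0; rewrite (bigD1 j) //= big1 ?addr0.
  by move=> /eqP; rewrite (negbTE nz).
move=> j' ne; move: (Z' j' isT) => /eqP; rewrite mulf_eq0 => /orP [/eqP//|].
by rewrite subr_eq0 -xj => /eqP e; move: (xinj _ _ ne); rewrite e eqxx.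
Qed.

Lemma Tg i : g i 0 = \sum_j T i j * g j 0.
Proof. by case: HT => _ [_ Tg]; rewrite -{1}Tg mxE. Qed.

Lemma Tpx i : (T *m p) i 0 = \sum_j T i j * g j 0 * x j.
Proof. by rewrite mxE; apply: eq_bigr => j _; rewrite -mulrA gx. Qed.

Lemma row_lb i c : (forall j, 0 < T i j -> c <= x j) ->
  c <= (T *m p) i 0 / g i 0.
Proof.
move=> H; rewrite ler_pdivlMr // Tpx Tg mulr_sumr; apply: ler_sum => j _.
case: HT => T0 _; have [Tz|Tp] := eqVneq (T i j) 0.
  by rewrite Tz !mul0r mulr0.
rewrite mulrC; apply: ler_wpM2l.
  by apply: mulr_ge0 => //; exact: ltW.
by apply: H; rewrite lt_neqAle eq_sym Tp T0.
Qed.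

Lemma row_ub i c : (forall j, 0 < T i j -> x j <= c) ->
  (T *m p) i 0 / g i 0 <= c.
Proof.
move=> H; rewrite ler_pdivrMr // Tpx Tg mulr_sumr; apply: ler_sum => j _.
case: HT => T0 _; have [Tz|Tp] := eqVneq (T i j) 0.
  by rewrite Tz !mul0r mulr0.
rewrite [X in _ <= X]mulrC; apply: ler_wpM2l.
  by apply: mulr_ge0 => //; exact: ltW.
by apply: H; rewrite lt_neqAle eq_sym Tp T0.
Qed.

Theorem claim2 : beta_order g (T *m p) mu.
Proof.
move=> a b ab.
have [c [H1 H2]] := @thr R _ (fun j => 0 < T (mu a) j) (fun j => 0 < T (mu b) j)
  x (fun j j' P Q => @L1 (mu a) (mu b) j j' P Q ltac:(by rewrite !permK)).
exact: (le_trans (@row_ub (mu b) c H2) (@row_lb (mu a) c H1)).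
Qed.

Theorem claim1 : extreme_point (orbitTP g p) (T *m p).
Proof.
split; first by exists T.
move=> y z t [S1 [HS1 ->]] [S2 [HS2 ->]] t0 t1 Hr.
apply: ps_inj => k.
have Hr' : \sum_(i | inA k i) (T *m p) i 0 =
   t * \sum_(i | inA k i) (S1 *m p) i 0 + (1 - t) * \sum_(i | inA k i) (S2 *m p) i 0.
  by rewrite Hr !mulr_sumr -big_split /=; apply: eq_bigr => i _; rewrite !mxE.
move: Hr'; rewrite !L5 //.
have [Y _] := @L4 S1 k HS1; have [Z _] := @L4 S2 k HS2.
move: Y Z.
set V := \sum_j _ * x j; set A := \sum_j _ * x j; set B := \sum_j _ * x j.
move=> Y Z E; nra.
Qed.

Theorem claim3 : (forall i j, i != j -> x i != x j) ->
  forall S, TP g S -> S *m p = T *m p -> S = T.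
Proof.
move=> xinj S HS Sp.
have HW k j : W S k j = W T k j.
  have [_ H] := @L4 S k HS; apply: H => //.
  by rewrite -!L5 // Sp.
apply/matrixP => i j.
move: (HW ((mu^-1)%g i).+1 j) (HW ((mu^-1)%g i) j); rewrite /W !splitA => H1 H2.
move: H1; rewrite H2 => /addIr.
by move/mulIf; apply; rewrite gt_eqF.
Qed.

End Main.

Lemma gibbs_pos (R : realType) (d : nat) (beta : R) (E : 'I_d -> R) (z : 'I_d) i :
  0 < gibbs beta E z i 0.
Proof.
rewrite /gibbs mxE; apply: divr_gt0; first exact: expR_gt0.
rewrite /Zpart (bigD1 z) //=; apply: (lt_le_trans (expR_gt0 (- (beta * (E z - E z))))).
rewrite lerDl; apply: sumr_ge0 => j _; apply: ltW; exact: expR_gt0.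
Qed.

Theorem mainTheorem9 (R : realType) (d : nat) (hd : (1 < d)%N) (beta : R)
  (E : 'I_d -> R) (T : 'M[R]_d) (lam mu : {perm 'I_d}) (p : 'cV[R]_d) :
  0 < beta ->
  E (idx0 hd) = 0 ->
  injective E ->
  biplanar (gibbs beta E (idx0 hd)) T ->
  plain T lam mu ->
  is_state p ->
  beta_order (gibbs beta E (idx0 hd)) p lam ->
  let g := gibbs beta E (idx0 hd) in
  let r := T *m p in
  [/\ extreme_point (orbitTP g p) r,
      beta_order g r mu &
      ((forall i j : 'I_d, i != j -> p i 0 / g i 0 != p j 0 / g j 0) ->
       forall S : 'M[R]_d, TP g S -> S *m p = r -> S = T)].
Proof.
move=> _ _ _ [[HT _] _] Hpl _ Hbo g r.
have gpos : forall i, 0 < g i 0 by move=> i; exact: gibbs_pos.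
split.
- exact: (@claim1 _ _ _ _ _ lam mu gpos HT Hpl Hbo).
- exact: (@claim2 _ _ _ _ _ lam mu gpos HT Hpl Hbo).
- move=> Hx S HS Sp; exact: (@claim3 _ _ _ _ _ lam mu gpos HT Hpl Hbo Hx S HS Sp).
Qed.
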